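(* Let $d,e,n$ be positive integers with $n>1$, $\gcd(e,n)=1$, and $d\cdot e\equiv 1 \pmod{\lambda(n)}$. Then $\omega_e(\omega_e(n))>0$, and $$d\equiv e^{\,\omega_e(\omega_e(n))-1} \pmod{\omega_e(n)}.$$
   Context: For integers $m$ and $N\ge 1$, define $\omega_m(N)=\min\{k\in\mathbb{N}: k>0,\ m^k\equiv 1\pmod N\}$ (the multiplicative order of $m$ modulo $N$) if $\gcd(m,N)=1$, and $\omega_m(N)=0$ if $\gcd(m,N)\ne 1$. The Carmichael function $\lambda$ is defined as follows: if $n=\prod_{i=1}^r p_i^{\alpha_i}$ is the prime factorization of $n$, then $\lambda(n)=\mathrm{lcm}\,(\lambda(p_1^{\alpha_1}),\dots,\lambda(p_r^{\alpha_r}))$, where $\lambda(p^{\alpha})=2^{\alpha-2}$ if $p=2$ and $\alpha\ge 3$, and $\lambda(p^\alpha)=p^{\alpha-1}(p-1)$ otherwise. *)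

(* Defs.v *)
From mathcomp Require Import all_boot.
From mathcomp Require Import cyclic.
Set Implicit Arguments. Unset Strict Implicit. Unset Printing Implicit Defensive.

Definition omega_pred (m N : nat) : pred nat :=
  fun k => (0 < k) && (m ^ k == 1 %[mod N]).

Lemma omega_ex (m N : nat) : coprime m N -> exists k, omega_pred m N k.
Proof.
case: N => [|N] cop.
  exists 1; rewrite /omega_pred /=; move: cop; rewrite /coprime gcdn0 => /eqP ->.
  by rewrite expn1.
exists (totient N.+1); apply/andP; split; first by rewrite totient_gt0.
by apply/eqP; apply: Euler_exp_totient.
Qed.

Definition omega (m N : nat) : nat :=
  match @idP (coprime m N) with
  | ReflectT h => ex_minn (omega_ex h)
  | ReflectF _ => 0
  end.

Definition lambda_pp (p a : nat) : nat :=
  if (p == 2) && (3 <= a) then 2 ^ (a - 2) else p ^ (a - 1) * (p - 1).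

Definition carmichael (n : nat) : nat :=
  \big[lcmn/1]_(p <- primes n) lambda_pp p (logn p n).

(* Main.v *)
Require Import Defs.
From mathcomp Require Import all_boot.
From mathcomp Require Import cyclic.
From mathcomp Require Import zify.

Lemma omega_spec m N : coprime m N ->
  [/\ 0 < omega m N, m ^ omega m N = 1 %[mod N] &
      forall k, 0 < k -> m ^ k = 1 %[mod N] -> omega m N <= k].
Proof.
move=> cop; rewrite /omega; destruct (@idP (coprime m N)) as [h|h]; last by [].
case: ex_minnP => w /andP [w0 /eqP hw] hmin; split => // k k0 hk.
by apply: hmin; rewrite /omega_pred k0 /=; apply/eqP.
Qed.

Lemma omega_dvd m N j : coprime m N -> m ^ j = 1 %[mod N] -> omega m N %| j.
Proof.
move=> cop hj; have [w0 hw hmin] := omega_spec m N cop.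
set w := omega m N in w0 hw hmin *.
have hr : m ^ (j %% w) = 1 %[mod N].
  rewrite -hj {2}(divn_eq j w) expnD (mulnC (j %/ w) w) expnM -modnMml -(modnXm _ N (m ^ w)) hw.
  by rewrite (modnXm (j %/ w) N 1) exp1n modnMml mul1n.
apply/dvdnP; exists (j %/ w).
case: (posnP (j %% w)) => [r0|rpos].
  by rewrite {1}(divn_eq j w) r0 addn0.
have := hmin _ rpos hr; rewrite leqNgt ltn_pmod //.
Qed.

Lemma big_lcm_dvd (s : seq nat) F x : x \in s -> F x %| \big[lcmn/1]_(p <- s) F p.
Proof.
elim: s => // a s IH; rewrite inE big_cons => /orP [/eqP ->|hx].
  exact: dvdn_lcml.
exact: dvdn_trans (IH hx) (dvdn_lcmr _ _).
Qed.

Lemma two_pow_step x k : 0 < k -> 0 < x -> 2 ^ k %| x - 1 -> 2 ^ k.+1 %| x ^ 2 - 1.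
Proof.
move=> k0 x0 h.
have -> : x ^ 2 - 1 = (x - 1) * (x + 1) by rewrite -subn_sqr exp1n.
rewrite expnSr; apply: dvdn_mul => //.
have h2 : 2 %| x - 1 by apply: dvdn_trans h; rewrite dvdn_exp.
have -> : x + 1 = (x - 1) + 2 * 1 by rewrite muln1; case: x x0 {h h2}=> // x _; rewrite subn1 /= addn2 addn1.
by rewrite dvdn_add // dvdn_mulr.
Qed.

Lemma two_pow_ord e j : odd e -> e ^ (2 ^ j.+1) = 1 %[mod 2 ^ j.+3].
Proof.
move=> oe; have e0 : 0 < e by case: e oe.
have epos : forall i, 0 < e ^ i by move=> i; rewrite expn_gt0 e0.
apply/eqP; rewrite eqn_mod_dvd ?epos //.
elim: j => [|j IH].
  rewrite expn1.
  have [t ->] : exists t, e = t.*2.+1.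
    by exists e./2; rewrite -{1}(odd_double_half e) oe.
  have -> : (t.*2.+1) ^ 2 - 1 = 4 * (t * t.+1).
    rewrite -mul2n expnS expn1; nia.
  rewrite (_ : 2 ^ 3 = 4 * 2) // dvdn_pmul2l //.
  by rewrite dvdn2 oddM /= andbN.
rewrite (expnS 2 j.+1) mulnC expnM; exact: two_pow_step.
Qed.

Lemma pow_mod1 x q N : x = 1 %[mod N] -> x ^ q = 1 %[mod N].
Proof. by move=> h; rewrite -modnXm h modnXm exp1n. Qed.

Lemma lambda_pp_exp p a e : prime p -> 0 < a -> coprime e p ->
  e ^ lambda_pp p a = 1 %[mod p ^ a].
Proof.
move=> pp a0 cop; rewrite /lambda_pp.
case: ifP => [/andP [/eqP p2 a3]|_].
  subst p; move: cop; rewrite coprimen2 => oe.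
  have -> : a = (a - 3).+3 by lia.
  have -> : (a - 3).+3 - 2 = (a - 3).+1 by lia.
  exact: two_pow_ord.
have -> : p ^ (a - 1) * (p - 1) = totient (p ^ a).
  by rewrite totient_pfactor // !subn1 mulnC.
by apply: Euler_exp_totient; rewrite coprime_pexpr.
Qed.

Lemma carmichael_exp e n : 0 < n -> coprime e n -> e ^ carmichael n = 1 %[mod n].
Proof.
move=> n0 cop; apply/eqP/modn_partP => // p pin.
have pp : prime p by move: pin; rewrite mem_primes => /andP [].
have pdn : p %| n by move: pin; rewrite mem_primes => /and3P [].
have hd : lambda_pp p (logn p n) %| carmichael n by apply: big_lcm_dvd.
case/dvdnP: hd => q ->.
rewrite mulnC expnM p_part; apply: pow_mod1; apply: lambda_pp_exp => //.
  by rewrite logn_gt0.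
by apply: coprime_dvdr pdn cop.
Qed.

Theorem mainTheorem2 (d e n : nat) :
  0 < d -> 0 < e -> 1 < n -> coprime e n ->
  d * e = 1 %[mod carmichael n] ->
  0 < omega e (omega e n) /\
  d = e ^ (omega e (omega e n) - 1) %[mod omega e n].
Proof.
move=> d0 e0 n1 cop hde.
have [k0 hk _] := omega_spec e n cop.
set k := omega e n in k0 hk *.
have hkd : k %| carmichael n.
  exact: (omega_dvd e n _ cop (carmichael_exp e n (ltnW n1) cop)).
have hde' : d * e = 1 %[mod k] by rewrite -(modn_dvdm _ hkd) hde modn_dvdm.
have copk : coprime e k.
  have : coprime (d * e) k by rewrite -coprime_modl hde' coprime_modl coprime1n.
  by rewrite coprimeMl => /andP [].
have [m0 hm _] := omega_spec e k copk.
set m := omega e k in m0 hm *.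
split => //.
have -> : d = d * e ^ m %[mod k] by rewrite -modnMmr hm modnMmr muln1.
by rewrite subn1 -{1}(prednK m0) expnS mulnA -modnMml hde' modnMml mul1n.
Qed.
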